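(* If $q=2^k$ with $k>1$ then $f(X):=X^{q+2}+bX^q+cX$ does not permute $\mathbb{F}_{q^2}$ for any $b,c\in\mathbb{F}_{q^2}$ with $b\ne 0$. *)

(* Defs.v *)
From mathcomp Require Import all_boot all_algebra all_field.
Set Implicit Arguments. Unset Strict Implicit. Unset Printing Implicit Defensive.
Import GRing.Theory.
Local Open Scope ring_scope.

Definition fpoly (F : finFieldType) (q : nat) (b c : F) : F -> F :=
  fun x => x ^+ (q + 2) + b * x ^+ q + c * x.

(* Main.v *)
Require Import Defs.
From mathcomp Require Import all_boot all_algebra all_field.
From mathcomp Require Import ring zify.
Set Implicit Arguments. Unset Strict Implicit. Unset Printing Implicit Defensive.
Import GRing.Theory.
Local Open Scope ring_scope.

Lemma frobD (F : finFieldType) (h2 : 2%N \in [pchar F]) (n : nat) (x y : F) :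
  (x + y) ^+ (2 ^ n) = x ^+ (2 ^ n) + y ^+ (2 ^ n).
Proof.
apply: exprDn_pchar; rewrite pnatX (pnatE _ (isT : prime 2)) h2 //.
Qed.

Lemma card_add_ker (F : finFieldType) (L : F -> F) :
  (forall x y, L (x + y) = L x + L y) ->
  #|F| = (#|L @: [set: F]| * #|[set y | L y == 0%R]|)%N.
Proof.
move=> LD.
have L0 : L 0 = 0 by apply: (@addrI _ (L 0)); rewrite -LD !addr0.
have LB : forall x y, L (x - y) = L x - L y.
  move=> x y; apply: (@addIr _ (L y)); by rewrite -LD !subrK.
rewrite -cardsT -sum1_card (partition_big_imset L) /= -sum_nat_const.
apply: eq_bigr => z /imsetP[y0 _ ->].
have -> : (\sum_(i in [set: F] | L i == L y0) 1 = \sum_(i in [set i | L i == L y0]) 1)%N.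
  by apply: eq_bigl => i; rewrite !inE.
rewrite sum1_card.
have -> : [set i | L i == L y0] = (fun k => y0 + k) @: [set y | L y == 0].
  apply/setP => x; rewrite inE; apply/eqP/imsetP.
    move=> Hx; exists (x - y0); first by rewrite inE LB Hx subrr.
    by rewrite addrC subrK.
  by case=> k; rewrite inE => /eqP Hk ->; rewrite LD Hk addr0.
by rewrite card_imset //; apply: addrI.
Qed.

Lemma Eall (F : finFieldType) (h2 : 2%N \in [pchar F]) (q : nat) (K : pred F) :
  (1 < q)%N ->
  (forall x : F, x ^+ (q * q) = x) ->
  (forall x y : F, (x + y) ^+ q = x ^+ q + y ^+ q) ->
  (exists z : F, z ^+ q != z) ->
  (forall x y, K x -> K y -> K (x + y)) ->
  (forall u l : F, l ^+ q.+1 = 1 -> K u -> K (l * u)) ->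
  forall m v, K v -> K (m * v).
Proof.
move=> q1 xQ frq [z0 hz0] KD KU.
pose E m := forall v, K v -> K (m * v).
have E1 : E 1 by move=> v; rewrite mul1r.
have ED : forall m1 m2, E m1 -> E m2 -> E (m1 + m2).
  by move=> m1 m2 h1 h2' v Kv; rewrite mulrDl; apply: KD; [apply: h1 | apply: h2'].
have EM : forall m1 m2, E m1 -> E m2 -> E (m1 * m2).
  by move=> m1 m2 h1 h2' v Kv; rewrite -mulrA; apply: h1; apply: h2'.
have EX : forall m n, E m -> E (m ^+ n).
  move=> m n Em; elim: n => [|n IH]; first by rewrite expr0.
  by rewrite exprS; apply: EM.
have EU : forall y, y != 0 -> E (y ^+ q.-1).
  move=> y y0 v; apply: KU; rewrite -exprM.
  apply: (mulIf y0); rewrite mul1r -exprSr.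
  have -> : (q.-1 * q.+1).+1 = (q * q)%N by clear -q1; nia.
  exact: xQ.
have Einv : forall m : F, m != 0 -> m ^+ (q * q).-2 * m = 1.
  move=> m m0; apply: (mulIf m0); rewrite mul1r -exprSr.
  rewrite -exprSr (_ : ((q * q).-2).+2 = (q * q)%N) ?xQ //; nia.
have Enot : forall y, y ^+ q != y -> E y.
  move=> y hy.
  have q0 : (0 < q)%N by lia.
  have y0 : y != 0 by apply: contraNneq hy => ->; rewrite expr0n eqn0Ngt q0.
  have y1 : y + 1 != 0.
    apply: contraNneq hy => /eqP; rewrite addr_eq0 oppr_pchar2 // => /eqP ->.
    by rewrite expr1n.
  set r := y ^+ q.-1; set s := (y + 1) ^+ q.-1.
  have ry : r * y = y ^+ q by rewrite /r -exprSr prednK.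
  have sy : s * (y + 1) = y ^+ q + 1 by rewrite /s -exprSr prednK // frq expr1n.
  have rs : (r + s) * y = 1 + s.
    have e : (r + s) * y - (1 + s) = (r * y - y ^+ q) + (s * (y + 1) - (y ^+ q + 1)) + (y ^+ q + y ^+ q) - (s + s) by ring.
    by apply/eqP; rewrite -subr_eq0 e ry sy !subrr !addrr_pchar2 // !add0r oppr0.
  have rs0 : r + s != 0.
    apply/eqP => h; move: rs; rewrite h mul0r => /eqP; rewrite eq_sym addr_eq0 oppr_pchar2 // => /eqP s1.
    move/eqP: h; rewrite -s1 addr_eq0 oppr_pchar2 // => /eqP r1.
    by move: hy; rewrite -ry r1 mul1r eqxx.
  have -> : y = (1 + s) * (r + s) ^+ (q * q).-2.
    by rewrite -rs mulrC mulrA Einv ?mul1r.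
  apply: EM; last by apply: EX; apply: ED; [apply: EU | apply: EU].
  by apply: ED => //; apply: EU.
move=> m; have [hm|hm] := eqVneq (m ^+ q) m; last by apply: Enot.
have hz : (m + z0) ^+ q != m + z0.
  by rewrite frq hm; apply: contraNneq hz0 => /addrI ->.
have -> : m = (m + z0) + z0 by rewrite -addrA addrr_pchar2 // addr0.
by apply: ED; apply: Enot.
Qed.

Lemma cover (F : finFieldType) (h2 : 2%N \in [pchar F]) (G A : {set F}) :
  (forall x y, x \in G -> y \in G -> x + y \in G) ->
  (forall a a', a \in A -> a' \in A -> a + a' \in G -> a = a') ->
  (#|F| <= #|A| * #|G|)%N ->
  forall t, exists2 a, a \in A & t + a \in G.
Proof.
move=> GD HA hc.
pose S := [set p.1 + p.2 | p in setX A G].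
have inj : {in setX A G &, injective (fun p : F * F => p.1 + p.2)}.
  move=> [a1 g1] [a2 g2] /setXP[Ha1 Hg1] /setXP[Ha2 Hg2] /= e.
  have ea : a1 = a2.
    apply: HA => //.
    have -> : a1 + a2 = g2 + g1.
      have -> : a1 = a2 + g2 + g1 by rewrite -e -addrA addrr_pchar2 // addr0.
      by rewrite [LHS]addrC !addrA addrr_pchar2 // add0r.
    by apply: GD.
  by move: e; rewrite ea => /addrI ->.
have cS : #|S| = (#|A| * #|G|)%N by rewrite card_in_imset // cardsX.
have ST : S = setT by apply/eqP; rewrite eqEcard subsetT cardsT cS.
move=> t; have : t \in S by rewrite ST inE.
case/imsetP => [[a g]] /setXP[Ha Hg] /= ->; exists a => //.
by rewrite addrAC addrr_pchar2 // add0r.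
Qed.

Lemma exists_nonroot (F : finFieldType) (n : nat) :
  (1 < n)%N -> (n < #|F|)%N -> exists z : F, z ^+ n != z.
Proof.
move=> n1 nF.
case: (pickP (fun z : F => z ^+ n != z)) => [z hz|hall]; first by exists z.
have hs : size ('X^n - 'X : {poly F}) = n.+1.
  by rewrite size_polyDl ?size_polyXn // size_polyN size_polyX.
have hp : ('X^n - 'X : {poly F}) != 0 by rewrite -size_poly_eq0 hs.
have := max_poly_roots hp (rs := enum F).
have hall' : all (root ('X^n - 'X)) (enum F).
  apply/allP => z _.
  by rewrite rootE !hornerE subr_eq0; move: (hall z) => /= /negbFE.
move=> /(_ hall' (enum_uniq _)); rewrite hs -cardE ltnS leqNgt nF.
by [].
Qed.

Lemma collision (F : finFieldType) (h2 : 2%N \in [pchar F]) (q : nat) (b c : F) :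
  (forall x y : F, (x + y) ^+ q = x ^+ q + y ^+ q) ->
  injective (fpoly q b c) ->
  forall v y : F, v != 0 -> y ^+ q + y ^+ 2 != 1 + b * v ^+ 2 + c * v ^+ q.+1.
Proof.
move=> frq inj v y v0; apply/negP => /eqP hy.
have fr2 : forall x y : F, (x + y) ^+ 2 = x ^+ 2 + y ^+ 2 by move=> x z; exact: (frobD h2 1).
set a := v^-1.
have a0 : a != 0 by rewrite invr_eq0.
have key : fpoly q b c (a * y + a) - fpoly q b c (a * y) =
    a ^+ q * a ^+ 2 * (y ^+ q + y ^+ 2 + 1) + b * a ^+ q + c * a.
  rewrite /fpoly !exprD frq fr2 !exprMn; ring.
rewrite hy /a !exprVn [v ^+ q.+1]exprSr in key.
have V0 : v ^+ q != 0 by rewrite expf_neq0.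
move: key.
have -> : (v ^+ q)^-1 * (v ^+ 2)^-1 * (1 + b * v ^+ 2 + c * (v ^+ q * v) + 1) + b * (v ^+ q)^-1 + c * v^-1
   = ((v ^+ q)^-1 * (v ^+ 2)^-1 + b * (v ^+ q)^-1 + c * v^-1) + ((v ^+ q)^-1 * (v ^+ 2)^-1 + b * (v ^+ q)^-1 + c * v^-1).
  by field; rewrite v0 V0.
rewrite addrr_pchar2 // => /eqP; rewrite subr_eq0 => /eqP /inj.
by rewrite -{2}[a * y]addr0 => /addrI /eqP; rewrite (negbTE a0).
Qed.

Definition Lq (F : finFieldType) (q : nat) (y : F) := y ^+ q + y ^+ 2.

Lemma idx (F : finFieldType) (h2 : 2%N \in [pchar F]) (q : nat) (b c : F) :
  (0 < q)%N ->
  (forall x : F, x ^+ (q * q) = x) ->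
  (forall x y : F, (x + y) ^+ q = x ^+ q + y ^+ q) ->
  (#|F| = #|@Lq F q @: [set: F]| * #|[set y : F | Lq q y == 0%R]|)%N ->
  (forall v y : F, v != 0 -> Lq q y != 1 + b * v ^+ 2 + c * v ^+ q.+1) ->
  forall u l : F, l ^+ q.+1 = 1 -> b * u ^+ 2 \in @Lq F q @: [set: F] ->
  b * (l * u) ^+ 2 \in @Lq F q @: [set: F].
Proof.
move=> q0 xQ frq cardF H u l hl hu.
set L := Lq q; set G := L @: [set: F].
have fr2 : forall x y : F, (x + y) ^+ 2 = x ^+ 2 + y ^+ 2 by move=> x z; exact: (frobD h2 1).
have e2 : forall x : F, x + x = 0 by move=> x; rewrite addrr_pchar2.
have LD : forall x y, L (x + y) = L x + L y.
  by move=> x y; rewrite /L /Lq frq fr2 addrACA.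
have GD : forall x y, x \in G -> y \in G -> x + y \in G.
  move=> x y /imsetP[x' _ ->] /imsetP[y' _ ->]; rewrite -LD; exact: imset_f.
have L0 : L 0 = 0 by rewrite /L /Lq !expr0n eqn0Ngt q0 /= addr0.
have G0 : 0 \in G by rewrite -L0; exact: imset_f.
have Kr4 : forall y, L y = 0 -> y ^+ 4 = y.
  move=> y /eqP; rewrite /L /Lq addr_eq0 oppr_pchar2 // => /eqP hy.
  by rewrite -{2}(xQ y) exprM hy exprAC hy -exprM.
have [->|u0] := eqVneq u 0; first by rewrite mulr0 expr0n /= mulr0.
have H' : forall m, m ^+ q.+1 = 1 -> (1 + c * u ^+ q.+1) + b * (m * u) ^+ 2 \notin G.
  move=> m hm; apply/imsetP => [[y _ hy]].
  have m0 : m != 0 by apply: contra_eq_neq hm => ->; rewrite expr0n /= eq_sym oner_neq0.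
  apply: (negP (H (m * u) y (mulf_neq0 m0 u0))).
  by rewrite -/L -hy [(m * u) ^+ q.+1]exprMn hm mul1r addrAC.
set e := 1 + c * u ^+ q.+1.
have he : e \notin G.
  apply: contra (H' 1 (expr1n _ _)) => eG; rewrite mul1r; exact: GD.
set z := b * (l * u) ^+ 2.
have hez : e + z \notin G by exact: H' l hl.
apply: contraT => hz.
have z0 : z != 0 by apply: contraNneq hz => ->.
case: (boolP [exists y, (L y == 0) && (y != 0) && (y != 1)]).
  case/existsP => w /andP[/andP[/eqP Lw w0] w1].
  have wq : w ^+ q = w ^+ 2.
    by move/eqP: Lw; rewrite /L /Lq addr_eq0 oppr_pchar2 // => /eqP.
  have w4 := Kr4 w Lw.
  have w3 : w ^+ 3 = 1 by apply: (mulIf w0); rewrite mul1r -exprSr w4.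
  have ww : w ^+ 2 + w + 1 = 0.
    have h : (w - 1) * (w ^+ 2 + w + 1) = w ^+ 3 - 1 by ring.
    move: h; rewrite w3 subrr => /eqP; rewrite mulf_eq0 subr_eq0 (negbTE w1) /=.
    by move/eqP.
  have wq1 : w ^+ q.+1 = 1 by rewrite exprS wq -exprS.
  have w2q1 : (w ^+ 2) ^+ q.+1 = 1 by rewrite exprAC wq1 expr1n.
  have Gw : forall g, g \in G -> w * g \in G.
    move=> g /imsetP[y _ ->]; have -> : w * L y = L (w ^+ 2 * y); last exact: imset_f.
    by rewrite /L /Lq !exprMn !wq -exprD /= w4 mulrDr.
  have w3z : forall x, w * (w * (w * x)) = x.
    by move=> x; rewrite !mulrA -expr2 -exprSr w3 mul1r.
  have nz1 : w * z \notin G.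
    by apply: contra hz => h; rewrite -(w3z z); apply: (Gw _ (Gw _ h)).
  have nz2 : w ^+ 2 * z \notin G.
    apply: contra hz => h; have -> : z = w * (w ^+ 2 * z) by rewrite mulrA -exprS w3 mul1r.
    exact: (Gw _ h).
  have nzall : forall X, X \in [:: z; w * z; w ^+ 2 * z] -> X \notin G.
    by move=> X; rewrite !inE => /or3P[] /eqP ->.
  have w1w : 1 + w = w ^+ 2.
    have h : 1 + w = w ^+ 2 - (w ^+ 2 + w + 1) + ((1 + w) + (1 + w)) by ring.
    by rewrite h ww e2 subr0 addr0.
  have w2w : 1 + w ^+ 2 = w.
    have h : 1 + w ^+ 2 = w - (w ^+ 2 + w + 1) + ((1 + w ^+ 2) + (1 + w ^+ 2)) by ring.
    by rewrite h ww e2 subr0 addr0.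
  have ww' : w + w ^+ 2 = 1.
    have h : w + w ^+ 2 = 1 - (w ^+ 2 + w + 1) + ((w + w ^+ 2) + (w + w ^+ 2)) by ring.
    by rewrite h ww e2 subr0 addr0.
  have s1 : z + w * z = w ^+ 2 * z by rewrite -{1}[z]mul1r -mulrDl w1w.
  have s2 : z + w ^+ 2 * z = w * z by rewrite -{1}[z]mul1r -mulrDl w2w.
  have s3 : w * z + w ^+ 2 * z = z by rewrite -mulrDl ww' mul1r.
  have s1' : w * z + z = w ^+ 2 * z by rewrite addrC.
  have s2' : w ^+ 2 * z + z = w * z by rewrite addrC.
  have s3' : w ^+ 2 * z + w * z = z by rewrite addrC.
  have Ksub : [set y | L y == 0] \subset [set x in [:: 0; 1; w; w ^+ 2]].
    apply/subsetP => y; rewrite !inE => /eqP Ly; have y4 := Kr4 y Ly.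
    have : y * (y - 1) * (y - w) * (y - w ^+ 2) = 0.
      have -> : y * (y - 1) * (y - w) * (y - w ^+ 2)
          = y ^+ 4 - y + y * (y - 1) * (w ^+ 2 + w + 1) * (w - 1 - y) by ring.
      by rewrite ww y4 subrr !mulr0 mul0r addr0.
    by move/eqP; rewrite !mulf_eq0 !subr_eq0 !orbA.
  have cK : (#|[set y | L y == 0%R]| <= 4)%N.
    by apply: (leq_trans (subset_leq_card Ksub)); rewrite cardsE card_size.
  have w2n1 : w ^+ 2 != 1.
    apply: contra w1 => /eqP h; apply/eqP; move: w3; rewrite exprSr h mul1r.
    by [].
  have wnw2 : w != w ^+ 2.
    apply: contra w1 => /eqP h; apply/eqP; apply: (mulIf w0).
    by rewrite mul1r -expr2 -h.
  have [a] : exists2 a, a \in [set x in [:: 0; z; w * z; w ^+ 2 * z]] & e + a \in G.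
    apply: (cover h2) => //.
      move=> a a'; rewrite !inE => /or4P[] /eqP -> /or4P[] /eqP -> // hG; exfalso;
      move: hG; rewrite ?addr0 ?add0r ?s1 ?s2 ?s3 ?s1' ?s2' ?s3' => hG;
      by apply: (negP (nzall _ _)) hG; rewrite !inE eqxx ?orbT.
    rewrite cardsE (card_uniqP _) /=.
      by rewrite cardF mulnC leq_mul2r cK orbT.
    rewrite !inE !negb_or !andbT.
    have d1 : forall x y, x != y -> (x * z == y * z) = false.
      move=> x y xy; apply/negbTE; apply: contra xy => /eqP h; apply/eqP.
      exact: (mulIf z0 h).
    apply/and3P; split.
    - by apply/and3P; split; rewrite eq_sym; [exact: z0 | exact: mulf_neq0 w0 z0 | exact: mulf_neq0 (expf_neq0 _ w0) z0].
    - by apply/andP; split; rewrite -{1}[z]mul1r d1 // eq_sym.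
    - by rewrite d1.
  rewrite !inE => /or4P[] /eqP ->; rewrite ?addr0 => hG.
  - by move: he; rewrite hG.
  - by move: hez; rewrite hG.
  - have hm : (w ^+ 2 * l) ^+ q.+1 = 1 by rewrite exprMn w2q1 hl mulr1.
    move: (H' _ hm).
    have -> : b * (w ^+ 2 * l * u) ^+ 2 = w * z.
      by rewrite /z -mulrA exprMn -exprM /= w4 mulrCA.
    by rewrite hG.
  - have hm : (w * l) ^+ q.+1 = 1 by rewrite exprMn wq1 hl mulr1.
    move: (H' _ hm).
    have -> : b * (w * l * u) ^+ 2 = w ^+ 2 * z.
      by rewrite /z -mulrA exprMn mulrCA.
    by rewrite hG.
rewrite negb_exists => /forallP hK.
have Ksub : [set y | L y == 0] \subset [set x in [:: 0; 1]].
  apply/subsetP => y; rewrite !inE => Ly.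
  by move: (hK y); rewrite Ly /= negb_and !negbK orbC.
have cK : (#|[set y | L y == 0%R]| <= 2)%N.
  by apply: (leq_trans (subset_leq_card Ksub)); rewrite cardsE card_size.
have [a] : exists2 a, a \in [set x in [:: 0; z]] & e + a \in G.
  apply: (cover h2) => //.
    move=> a a'; rewrite !inE => /orP[] /eqP -> /orP[] /eqP -> //; rewrite ?addr0 ?add0r => hG;
    by move: hz; rewrite hG.
  rewrite cardsE (card_uniqP _) /=; last by rewrite inE eq_sym z0.
  by rewrite cardF mulnC leq_mul2r cK orbT.
rewrite !inE => /orP[] /eqP ->; rewrite ?addr0 => hG.
  by move: he; rewrite hG.
by move: hez; rewrite hG.
Qed.

Theorem lemma2p4 (k : nat) (F : finFieldType) (b c : F) :
  (1 < k)%N -> #|F| = ((2 ^ k) ^ 2)%N -> b != 0 ->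
  ~ bijective (fpoly (2 ^ k) b c).
Proof.
move=> hk hF hb /bij_inj inj.
have h2 : 2%N \in [pchar F].
  by apply: (@card_finPcharP F 2 (k * 2)) => //; rewrite hF expnM.
have q4 : (2 ^ 2 <= 2 ^ k)%N by rewrite leq_exp2l.
set q := (2 ^ k)%N in hF inj q4 *.
have QE : #|F| = (q * q)%N by rewrite hF mulnn.
have xQ : forall x : F, x ^+ (q * q) = x by move=> x; rewrite -QE expf_card.
have frq : forall x y : F, (x + y) ^+ q = x ^+ q + y ^+ q by move=> x y; exact: frobD h2 k x y.
have fr2 : forall x y : F, (x + y) ^+ 2 = x ^+ 2 + y ^+ 2 by move=> x y; exact: (frobD h2 1).
have q0 : (0 < q)%N by rewrite /q expn_gt0.
have H := collision h2 frq inj.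
have LD : forall x y : F, Lq q (x + y) = Lq q x + Lq q y.
  by move=> x y; rewrite /Lq frq fr2 addrACA.
have cardF := card_add_ker LD.
set G := Lq q @: [set: F].
have IDX := idx h2 q0 xQ frq cardF H.
have GD : forall x y, x \in G -> y \in G -> x + y \in G.
  move=> x y /imsetP[x' _ ->] /imsetP[y' _ ->]; rewrite -LD; exact: imset_f.
have KD : forall x y : F, b * x ^+ 2 \in G -> b * y ^+ 2 \in G -> b * (x + y) ^+ 2 \in G.
  by move=> x y hx hy; rewrite fr2 mulrDr; apply: GD.
have q1 : (1 < q)%N by move: q4; rewrite /=; lia.
have exz : exists z : F, z ^+ q != z.
  by apply: exists_nonroot => //; rewrite QE; nia.
have AllE := Eall h2 (K := fun v => b * v ^+ 2 \in G) q1 xQ frq exz KD IDX.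
pose sq (x : F) := x ^+ (2 ^ k.-1 * q).
have sqK : forall x, sq x ^+ 2 = x.
  move=> x; rewrite /sq -exprM.
  have -> : (2 ^ k.-1 * q * 2 = q * q)%N.
    by rewrite mulnAC -expnSr prednK //; lia.
  exact: xQ.
have [z4 hz4] : exists z : F, z ^+ 4 != z.
  by apply: exists_nonroot => //; rewrite QE; nia.
have g0 : Lq q z4 != 0.
  apply: contraNneq hz4 => /eqP; rewrite /Lq addr_eq0 oppr_pchar2 // => /eqP hy.
  by rewrite -{2}(xQ z4) exprM hy exprAC hy -exprM.
set g := Lq q z4.
have gG : g \in G by exact: imset_f.
set v0 := sq (g / b).
have Kv0 : b * v0 ^+ 2 \in G by rewrite /v0 sqK mulrC divfK.
have v00 : v0 != 0.
  apply: contra g0 => /eqP h; move: (sqK (g / b)); rewrite -/v0 h expr0n /= => /eqP.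
  by rewrite eq_sym mulf_eq0 invr_eq0 (negbTE hb) orbF.
have allG : forall x : F, x \in G.
  move=> x; have <- : b * sq (x / b) ^+ 2 = x by rewrite sqK mulrC divfK.
  have -> : sq (x / b) = (sq (x / b) / v0) * v0 by rewrite divfK.
  exact: AllE.
have GT : G = [set: F] by apply/setP => x; rewrite inE allG.
have K2 : (2 <= #|[set y : F | Lq q y == 0%R]|)%N.
  have sub : [set (0 : F); 1] \subset [set y : F | Lq q y == 0%R].
    apply/subsetP => y; rewrite !inE => /orP[] /eqP ->; rewrite /Lq.
      by rewrite !expr0n eqn0Ngt q0 /= addr0.
    by rewrite !expr1n addrr_pchar2.
  by apply: (leq_trans _ (subset_leq_card sub)); rewrite cards2 eq_sym oner_neq0.
move: cardF; rewrite -/G GT cardsT => hc.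
have F0 : (0 < #|F|)%N by rewrite QE muln_gt0 q0.
by move: K2 F0 hc; set m := #|[set y : F | Lq q y == 0%R]|; set n := #|F|; nia.
Qed.
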